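(* Let $\Gamma$ be a finite, connected, labelled simplicial graph on at least three vertices, and let $H,V$ be two standard big chunk parabolic subgroups of $A_\Gamma$. If $H\le kVk^{-1}$ for some $k\in A_\Gamma$, then $H=V$ and $k\in H$.
   Context: Labels $m_{ab}\in\mathbb{Z}_{\ge2}$ on edges; $A_\Gamma=\langle V(\Gamma)\mid \mathrm{prod}(a,b,m_{ab})=\mathrm{prod}(b,a,m_{ab})\ \forall\{a,b\}\in E(\Gamma)\rangle$, with $\mathrm{prod}(u,v,n)$ the prefix of length $n$ of $uvuv\cdots$. For a full subgraph $\Lambda$, $A_\Lambda=\langle V(\Lambda)\rangle\le A_\Gamma$ (standard parabolic subgroup). A big chunk of $\Gamma$ is a connected induced subgraph with no separating vertex (a vertex whose removal disconnects it), maximal with respect to inclusion among such subgraphs. A standard big chunk parabolic is $A_\Lambda$ for a big chunk $\Lambda$. *)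

(* Defs.v *)
(* Artin groups given by presentation: elements are words in
   generators and their inverses, equality in A_Gamma is the congruence
   generated by free cancellation and the Artin relations. *)
From mathcomp Require Import all_boot.
Set Implicit Arguments. Unset Strict Implicit. Unset Printing Implicit Defensive.

Section Artin.
Variable T : finType.

(* a letter (x, false) is the generator x, (x, true) is x^-1 *)
Definition word := seq (T * bool).

Definition winv (w : word) : word := rev (map (fun l => (l.1, ~~ l.2)) w).

Definition alt_prod (u v : T) (n : nat) : word :=
  mkseq (fun i => if odd i then (v, false) else (u, false)) n.

Variables (e : rel T) (m : T -> T -> nat).

Inductive artin_eq : word -> word -> Prop :=
| ae_refl w : artin_eq w w
| ae_sym w1 w2 : artin_eq w1 w2 -> artin_eq w2 w1
| ae_trans w1 w2 w3 : artin_eq w1 w2 -> artin_eq w2 w3 -> artin_eq w1 w3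
| ae_cancel u w x b : artin_eq (u ++ (x, b) :: (x, ~~ b) :: w) (u ++ w)
| ae_rel u w a b : e a b ->
    artin_eq (u ++ alt_prod a b (m a b) ++ w) (u ++ alt_prod b a (m a b) ++ w).

Definition word_in (S : {set T}) (w : word) : bool := all (fun l => l.1 \in S) w.

Definition in_parabolic (S : {set T}) (g : word) : Prop :=
  exists w, word_in S w /\ artin_eq g w.

Definition induced (S : {set T}) : rel T := [rel x y | [&& e x y, x \in S & y \in S]].

Definition connected_in (S : {set T}) : Prop :=
  forall a b, a \in S -> b \in S -> connect (induced S) a b.

Definition chunk (S : {set T}) : Prop :=
  [/\ S != set0, connected_in S & forall v, v \in S -> connected_in (S :\ v)].

Definition big_chunk (S : {set T}) : Prop :=
  chunk S /\ forall S', chunk S' -> S \subset S' -> S' = S.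

End Artin.

(* Main.v *)
Require Import Defs.
From mathcomp Require Import all_boot.
Set Implicit Arguments. Unset Strict Implicit. Unset Printing Implicit Defensive.
Set Warnings "-notation-overridden".

Section Gen.
Variable T : finType.
Variable m : T -> T -> nat.
Implicit Types (e : rel T) (w u : word T).

Definition runA (X : Type) (act : T -> bool -> X -> X) (w : word T) (p : X) : X :=
  foldr (fun l q => act l.1 l.2 q) p w.

Lemma runA_cat X (act : T -> bool -> X -> X) w1 w2 p :
  runA act (w1 ++ w2) p = runA act w1 (runA act w2 p).
Proof. by rewrite /runA foldr_cat. Qed.

Lemma alt_prodS (a b : T) k : alt_prod a b k.+1 = (a, false) :: alt_prod b a k.
Proof.
rewrite /alt_prod /mkseq /= -[1]addn0 iotaDl -map_comp; congr cons.
by apply eq_map => i /=; rewrite add0n; case: (odd i).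
Qed.

Lemma artin_act e X (P : X -> Prop) (act : T -> bool -> X -> X) :
  (forall x b p, P p -> P (act x b p)) ->
  (forall x b p, P p -> act x b (act x (~~ b) p) = p) ->
  (forall a b p, e a b -> P p ->
     runA act (alt_prod a b (m a b)) p = runA act (alt_prod b a (m a b)) p) ->
  forall w1 w2, artin_eq e m w1 w2 -> forall p, P p -> runA act w1 p = runA act w2 p.
Proof.
move=> HP Hinv Hrel.
have HPr : forall w p, P p -> P (runA act w p).
  by elim=> [|[x b] w IH] p Pp //=; apply: HP; apply: IH.
move=> w1 w2; elim=> {w1 w2}.
- by [].
- by move=> w1 w2 _ IH p Pp; rewrite IH.
- by move=> w1 w2 w3 _ IH1 _ IH2 p Pp; rewrite IH1 // IH2.
- move=> u w x b p Pp; rewrite !runA_cat /=.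
  by rewrite Hinv //; apply: HPr.
- move=> u w a b eab p Pp; rewrite !runA_cat; congr (runA act u _).
  by apply: Hrel => //; apply: HPr.
Qed.

Lemma ae_ctx e w1 w2 u u' : artin_eq e m w1 w2 -> artin_eq e m (u ++ w1 ++ u') (u ++ w2 ++ u').
Proof.
elim=> {w1 w2}.
- by move=> w; apply: ae_refl.
- by move=> w1 w2 _ IH; apply: ae_sym.
- by move=> w1 w2 w3 _ IH1 _ IH2; apply: ae_trans IH2.
- move=> v w x b.
  have -> : u ++ (v ++ [:: (x, b), (x, ~~ b) & w]) ++ u' = (u ++ v) ++ [:: (x, b), (x, ~~ b) & w ++ u'].
    by rewrite -!catA.
  have -> : u ++ (v ++ w) ++ u' = (u ++ v) ++ (w ++ u') by rewrite -!catA.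
  exact: ae_cancel.
- move=> v w a b eab.
  have H : forall z, u ++ (v ++ z ++ w) ++ u' = (u ++ v) ++ z ++ (w ++ u').
    by move=> z; rewrite -!catA.
  rewrite !H; exact: ae_rel.
Qed.

Lemma ae_catl e w1 w2 u : artin_eq e m w1 w2 -> artin_eq e m (u ++ w1) (u ++ w2).
Proof. by move=> H; have := ae_ctx u [::] H; rewrite !cats0. Qed.

Lemma ae_catr e w1 w2 u : artin_eq e m w1 w2 -> artin_eq e m (w1 ++ u) (w2 ++ u).
Proof. by move=> H; have := ae_ctx [::] u H. Qed.

Lemma ae_cat e w1 w2 w3 w4 : artin_eq e m w1 w2 -> artin_eq e m w3 w4 ->
  artin_eq e m (w1 ++ w3) (w2 ++ w4).
Proof.
move=> H1 H2; apply: ae_trans (ae_catr _ H1) _; exact: ae_catl.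
Qed.

Lemma winv_cat w1 w2 : winv (w1 ++ w2) = winv w2 ++ winv w1.
Proof. by rewrite /winv map_cat rev_cat. Qed.

Lemma winv_cons l w : winv (l :: w) = winv w ++ [:: (l.1, ~~ l.2)].
Proof. by rewrite /winv /= rev_cons cats1. Qed.

Lemma winvK w : winv (winv w) = w.
Proof.
by rewrite /winv map_rev revK -map_comp map_id_in // => [[x b]] _ /=; rewrite negbK.
Qed.

Lemma ae_invr e w : artin_eq e m (w ++ winv w) [::].
Proof.
elim: w => [|[x b] w IH] /=; first exact: ae_refl.
rewrite winv_cons /=.
have -> : (x, b) :: w ++ winv w ++ [:: (x, ~~ b)] = [:: (x,b)] ++ (w ++ winv w) ++ [:: (x, ~~ b)].
  by rewrite /= catA.
apply: ae_trans (ae_ctx _ _ IH) _ => /=.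
exact: (ae_cancel e m [::] [::] x b).
Qed.

Lemma ae_invl e w : artin_eq e m (winv w ++ w) [::].
Proof. by have := ae_invr e (winv w); rewrite winvK. Qed.

Lemma ae_winv e w1 w2 : artin_eq e m w1 w2 -> artin_eq e m (winv w1) (winv w2).
Proof.
move=> H.
(* winv w1 ~ winv w1 ++ w2 ++ winv w2 ~ winv w1 ++ w1 ++ winv w2 ~ winv w2 *)
apply: ae_trans (_ : artin_eq e m _ (winv w1 ++ w2 ++ winv w2)) _.
  have := ae_catl (winv w1) (ae_sym (ae_invr e w2)); by rewrite cats0.
apply: ae_trans (_ : artin_eq e m _ (winv w1 ++ w1 ++ winv w2)) _.
  exact: ae_catl (ae_catr _ (ae_sym H)).
rewrite catA; have := ae_catr (winv w2) (ae_invl e w1); by [].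
Qed.

Lemma ae_mono e e' w1 w2 : subrel e e' -> artin_eq e m w1 w2 -> artin_eq e' m w1 w2.
Proof.
move=> sub; elim=> {w1 w2}.
- by move=> w; apply: ae_refl.
- by move=> w1 w2 _ IH; apply: ae_sym.
- by move=> w1 w2 w3 _ IH1 _ IH2; apply: ae_trans IH2.
- by move=> *; apply: ae_cancel.
- by move=> u w a b eab; apply: ae_rel; apply: sub.
Qed.

Lemma ae_ext e e' w1 w2 : e =2 e' -> artin_eq e m w1 w2 -> artin_eq e' m w1 w2.
Proof. by move=> H; apply: ae_mono => x y; rewrite H. Qed.

Definition wmap (f : T -> T) (w : word T) : word T := map (fun l => (f l.1, l.2)) w.

Lemma wmap_cat f w1 w2 : wmap f (w1 ++ w2) = wmap f w1 ++ wmap f w2.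
Proof. exact: map_cat. Qed.

Lemma wmap_alt f a b k : wmap f (alt_prod a b k) = alt_prod (f a) (f b) k.
Proof.
elim: k a b => [|k IH] a b //.
by rewrite !alt_prodS /= IH.
Qed.

Lemma ae_wmap e e' f w1 w2 :
  (forall a b, e a b -> artin_eq e' m (alt_prod (f a) (f b) (m a b)) (alt_prod (f b) (f a) (m a b))) ->
  artin_eq e m w1 w2 -> artin_eq e' m (wmap f w1) (wmap f w2).
Proof.
move=> Hrel; elim=> {w1 w2}.
- by move=> w; apply: ae_refl.
- by move=> w1 w2 _ IH; apply: ae_sym.
- by move=> w1 w2 w3 _ IH1 _ IH2; apply: ae_trans IH2.
- by move=> u w x b; rewrite !wmap_cat /=; apply: ae_cancel.
- move=> u w a b eab; rewrite !wmap_cat !wmap_alt.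
  by apply: ae_ctx; apply: Hrel.
Qed.

Lemma wmap_id_in (S : {set T}) f w : {in S, f =1 id} -> word_in S w -> wmap f w = w.
Proof.
move=> H; elim: w => [|[x b] w IH] //= /andP [xS wS].
by rewrite H // IH.
Qed.

End Gen.

From Stdlib Require Import Reals Lra FunctionalExtensionality.

Fixpoint galt (Y : Type) (s t : Y -> Y) (k : nat) (y : Y) : Y :=
  match k with 0 => y | k'.+1 => s (galt t s k' y) end.

Lemma galt_even Y (s t : Y -> Y) j y : galt s t j.*2 y = iter j (fun z => s (t z)) y.
Proof. by elim: j => [|j IH] //=; rewrite IH. Qed.

Lemma galt_odd Y (s t : Y -> Y) j y : galt s t j.*2.+1 y = iter j (fun z => s (t z)) (s y).
Proof. by elim: j => [|j IH] //=; rewrite -IH. Qed.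

Lemma galt_braid Y (s t : Y -> Y) k :
  (forall y, s (s y) = y) -> (forall y, t (t y) = y) ->
  (forall y, iter k (fun z => s (t z)) y = y) ->
  forall y, galt s t k y = galt t s k y.
Proof.
move=> ss tt Hk.
set N := fun z => s (t z). set R := fun z => t (s z).
have NR : forall j y, iter j N (iter j R y) = y.
  elim=> [|j IH] y //=; rewrite -iterS iterSr /N /R /= tt ss; exact: IH.
have RN : forall j y, iter j R (iter j N y) = y.
  elim=> [|j IH] y //=; rewrite -iterS iterSr /N /R /= ss tt; exact: IH.
have [j [Ek|Ek]] : exists j, k = j.*2 \/ k = j.*2.+1.
  exists k./2; rewrite -{1 3}(odd_double_half k); case: (odd k); [right|left]; by [].
- subst k => y; rewrite !galt_even -/N -/R.
  have := Hk y; rewrite -addnn iterD => E.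
  by rewrite -{2}E RN.
- subst k => y; rewrite !galt_odd -/N -/R.
  have -> : t y = R (s y) by rewrite /R ss.
  rewrite -iterSr.
  have := Hk (s y); rewrite -addnn -addSn iterD => E.
  by rewrite -{2}E RN.
Qed.

Section Tits.
Variable T : finType.
Variable e : rel T.
Variable m : T -> T -> nat.
Hypothesis e_sym : symmetric e.
Hypothesis e_irr : irreflexive e.
Hypothesis m_sym : forall a b, m a b = m b a.
Hypothesis m_ge2 : forall a b, e a b -> 2 <= m a b.

Local Open Scope R_scope.

Definition cth (a b : T) : R := cos (PI / INR (m a b)).
Definition bb (u x : T) : R := if u == x then 1 else if e u x then - cth u x else 0.
Definition tits (x : T) (_ : bool) (p : T -> R) : T -> R := fun u => p u - 2 * bb u x * p x.

Lemma bb_refl x : bb x x = 1.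
Proof. by rewrite /bb eqxx. Qed.

Lemma tits_inv x b b' p : tits x b (tits x b' p) = p.
Proof.
apply: functional_extensionality => u; rewrite /tits bb_refl; ring.
Qed.

Lemma cos_lt1 (k : nat) : (2 <= k)%nat -> cos (PI / INR k) ^ 2 < 1.
Proof.
move=> hk.
have hk' : 2 <= INR k by apply: (le_INR 2 k); apply/leP.
have hpos : 0 < PI / INR k by apply: Rdiv_lt_0_compat; [exact: PI_RGT_0|lra].
have hlt : PI / INR k < PI.
  apply: (Rmult_lt_reg_r (INR k)); first lra.
  rewrite /Rdiv Rmult_assoc Rinv_l; last lra.
  have := PI_RGT_0; nra.
have := sin_gt_0 _ hpos hlt; have := sin2_cos2 (PI / INR k); rewrite /Rsqr; nra.
Qed.

Section Edge.
Variables (a b : T).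
Hypothesis eab : e a b.

Let c := cth a b.
Let mm := m a b.

Lemma bb_ab : bb a b = - c.
Proof. by rewrite /bb eab; case: eqP => // Eab; have := eab; rewrite Eab e_irr. Qed.
Lemma bb_ba : bb b a = - c.
Proof.
rewrite /bb e_sym eab; case: eqP => // Eab; first by have := eab; rewrite Eab e_irr.
by rewrite /cth m_sym.
Qed.

Variable p : T -> R.
Let P := p a.
Let Q := p b.

Definition FF (z : R * R) : T -> R := fun u => p u + z.1 * bb u a + z.2 * bb u b.
Definition Ga (z : R * R) : R * R := (z.1 - 2 * (P + z.1 - c * z.2), z.2).
Definition Gb (z : R * R) : R * R := (z.1, z.2 - 2 * (Q - c * z.1 + z.2)).

Lemma tits_a z bo : tits a bo (FF z) = FF (Ga z).
Proof.
apply: functional_extensionality => u; rewrite /tits /FF /Ga /= bb_refl bb_ab -/P; ring.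
Qed.
Lemma tits_b z bo : tits b bo (FF z) = FF (Gb z).
Proof.
apply: functional_extensionality => u; rewrite /tits /FF /Gb /= bb_refl bb_ba -/Q; ring.
Qed.

Lemma run_alt k :
  (forall z, runA tits (alt_prod a b k) (FF z) = FF (galt Ga Gb k z)) /\
  (forall z, runA tits (alt_prod b a k) (FF z) = FF (galt Gb Ga k z)).
Proof.
elim: k => [|k [IH1 IH2]]; first by split.
split=> z; rewrite alt_prodS /=.
- by rewrite (IH2 z) tits_a.
- by rewrite (IH1 z) tits_b.
Qed.

Definition phi (z : R * R) : R * R := (P + z.1 - c * z.2, Q - c * z.1 + z.2).
Definition Ma (w : R * R) : R * R := (- w.1, w.2 + 2 * c * w.1).
Definition Mb (w : R * R) : R * R := (w.1 + 2 * c * w.2, - w.2).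

Lemma phi_a z : phi (Ga z) = Ma (phi z).
Proof. rewrite /phi /Ga /Ma /=; f_equal; ring. Qed.
Lemma phi_b z : phi (Gb z) = Mb (phi z).
Proof. rewrite /phi /Gb /Mb /=; f_equal; ring. Qed.

Lemma phi_alt k z : (phi (galt Ga Gb k z) = galt Ma Mb k (phi z)) /\
   (phi (galt Gb Ga k z) = galt Mb Ma k (phi z)).
Proof.
elim: k => [|k [IH1 IH2]] //=.
by rewrite phi_a phi_b IH1 IH2.
Qed.

Lemma phi_inj z1 z2 : phi z1 = phi z2 -> z1 = z2.
Proof.
case: z1 z2 => [x1 y1] [x2 y2]; rewrite /phi /= => [[E1 E2]].
have hc := cos_lt1 (m_ge2 eab); rewrite -/(cth a b) -/c in hc.
have d1 : x1 - x2 = c * (y1 - y2) by lra.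
have d2 : y1 - y2 = c * (x1 - x2) by lra.
have hx : (1 - c ^ 2) * (x1 - x2) = 0.
  replace ((1 - c ^ 2) * (x1 - x2)) with ((x1 - x2) - c * (c * (x1 - x2))) by ring.
  rewrite -d2; lra.
have hx' : x1 = x2.
  case: (Rmult_integral _ _ hx) => H; lra.
subst x2; f_equal; lra.
Qed.

Lemma Ma_inv w : Ma (Ma w) = w.
Proof. case: w => x y; rewrite /Ma /=; f_equal; ring. Qed.
Lemma Mb_inv w : Mb (Mb w) = w.
Proof. case: w => x y; rewrite /Mb /=; f_equal; ring. Qed.

Lemma N_iter w : iter mm (fun z => Ma (Mb z)) w = w.
Proof.
set N := fun z => Ma (Mb z).
have hm2 : (2 <= mm)%nat := m_ge2 eab.
have [H2|H3] : mm = 2%nat \/ (3 <= mm)%nat.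
  by case: (mm) hm2 => [|[|[|k]]] //= _; [left|right].
- have c0 : c = 0 by rewrite /c /cth -/mm H2 /= cos_PI2.
  rewrite H2 /= /N /Ma /Mb c0; case: w => x y /=; f_equal; ring.
set th := PI / INR mm.
have hmR : 3 <= INR mm.
  have h := le_INR 3 mm (ltac:(by apply/leP)); simpl in h; lra.
have th_pos : 0 < th by apply: Rdiv_lt_0_compat; [exact: PI_RGT_0|lra].
have th_m : INR mm * th = PI by rewrite /th; field; lra.
have hPI := PI_RGT_0.
have th_lt : 2 * th < PI.
  have : 3 * th <= INR mm * th by apply: Rmult_le_compat_r; lra.
  lra.
have s2pos : 0 < sin (2 * th) := sin_gt_0 (2 * th) (ltac:(lra)) th_lt.
have cth_def : c = cos th by [].
have rec : forall k : nat, sin (2 * INR k.+2 * th) =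
   2 * (2 * c * c - 1) * sin (2 * INR k.+1 * th) - sin (2 * INR k * th).
  move=> k.
  have E1 : 2 * INR k.+2 * th = 2 * INR k.+1 * th + 2 * th by rewrite (S_INR k.+1); ring.
  have E2 : 2 * INR k * th = 2 * INR k.+1 * th - 2 * th by rewrite (S_INR k); ring.
  rewrite E1 E2 sin_plus sin_minus cth_def -cos_2a_cos; ring.
have cheb : forall k : nat,
   sin (2 * th) * (iter k.+1 N w).1 = sin (2 * INR k.+1 * th) * (N w).1 - sin (2 * INR k * th) * w.1 /\
   sin (2 * th) * (iter k.+1 N w).2 = sin (2 * INR k.+1 * th) * (N w).2 - sin (2 * INR k * th) * w.2.
  elim=> [|k [IH1 IH2]].
    have -> : 2 * INR 1 * th = 2 * th by simpl; ring.
    have -> : 2 * INR 0 * th = 0 by simpl; ring.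
    rewrite sin_0 /=; split; ring.
  rewrite iterS; set u := iter k.+1 N w in IH1 IH2 *.
  rewrite rec; split.
  + transitivity (- (sin (2 * th) * u.1) - 2 * c * (sin (2 * th) * u.2)).
      by rewrite /N /Ma /Mb /=; ring.
    rewrite IH1 IH2 /N /Ma /Mb /=; ring.
  + transitivity (2 * c * (sin (2 * th) * u.1) + (4 * c * c - 1) * (sin (2 * th) * u.2)).
      by rewrite /N /Ma /Mb /=; ring.
    rewrite IH1 IH2 /N /Ma /Mb /=; ring.
case E : mm hm2 => [|k] // _.
have [C1 C2] := cheb k.
have S1 : sin (2 * INR k.+1 * th) = 0.
  by rewrite -E; replace (2 * INR mm * th) with (2 * PI) by (rewrite -th_m; ring); exact: sin_2PI.
have S2 : sin (2 * INR k * th) = - sin (2 * th).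
  have : 2 * INR k * th = 2 * PI - 2 * th.
    by rewrite -th_m E S_INR; ring.
  move=> ->; rewrite sin_minus sin_2PI cos_2PI; ring.
rewrite S1 S2 in C1 C2.
have e1 : (iter k.+1 N w).1 = w.1.
  apply: (Rmult_eq_reg_l (sin (2 * th))); [lra|lra].
have e2 : (iter k.+1 N w).2 = w.2.
  apply: (Rmult_eq_reg_l (sin (2 * th))); [lra|lra].
move: e1 e2; case: (iter k.+1 N w) => x' y'; case: (w) => x y /= -> -> //.
Qed.

Lemma tits_braid : runA tits (alt_prod a b (m a b)) p = runA tits (alt_prod b a (m a b)) p.
Proof.
have Ep : p = FF (0, 0).
  by apply: functional_extensionality => u; rewrite /FF /=; ring.
rewrite Ep (proj1 (run_alt _) (0,0)) (proj2 (run_alt _) (0,0)); congr FF.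
apply: phi_inj; rewrite (proj1 (phi_alt _ _)) (proj2 (phi_alt _ _)).
apply: galt_braid; [exact: Ma_inv|exact: Mb_inv|exact: N_iter].
Qed.

End Edge.

Lemma tits_sep (e' : rel T) : subrel e' e -> forall x y,
  artin_eq e' m [:: (x, false)] [:: (y, false)] -> x = y.
Proof.
move=> sub x y H.
have := @artin_act T m e' (T -> R) (fun _ => True) tits
  (fun _ _ _ _ => I) (fun x b p _ => tits_inv x b (~~ b) p)
  (fun a b p eab _ => tits_braid (sub _ _ eab) p) _ _ H
  (fun u => if u == x then 1 else 0) I.
rewrite /runA /= /tits => E.
have := f_equal (fun f => f x) E; rewrite /= eqxx bb_refl.
case: eqP => // nxy; lra.
Qed.
End Tits.

From Stdlib Require Import ZArith Lia ClassicalEpsilon Classical PropExtensionality FunctionalExtensionality.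

Section Len.
Variable T : finType.
Variable m : T -> T -> nat.

Definition sgnb (b : bool) : Z := if b then (-1)%Z else 1%Z.
Definition lenact (x : T) (b : bool) (z : Z) : Z := (sgnb b + z)%Z.
Definition ell (w : word T) : Z := runA lenact w 0%Z.

Lemma run_len w z : runA lenact w z = (ell w + z)%Z.
Proof.
elim: w z => [|[x b] w IH] z /=; first by [].
rewrite /ell /= /lenact IH (IH 0%Z); lia.
Qed.

Lemma ell_cat w1 w2 : ell (w1 ++ w2) = (ell w1 + ell w2)%Z.
Proof. by rewrite /ell runA_cat run_len (run_len w2 0) Z.add_0_r. Qed.

Lemma ell_cons x b w : ell ((x, b) :: w) = (sgnb b + ell w)%Z.
Proof. by rewrite /ell /= /lenact. Qed.

Lemma ell_winv w : ell (winv w) = (- ell w)%Z.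
Proof.
elim: w => [|[x b] w IH] //=; rewrite winv_cons ell_cat IH !ell_cons.
have -> : ell [::] = 0%Z by [].
case: b => /=; rewrite /lenact /sgnb; lia.
Qed.

Lemma ell_alt a b k : ell (alt_prod a b k) = Z.of_nat k.
Proof.
elim: k a b => [|k IH] a b //; rewrite alt_prodS ell_cons IH /sgnb; lia.
Qed.

Lemma ell_ae (e : rel T) w1 w2 : artin_eq e m w1 w2 -> ell w1 = ell w2.
Proof.
move=> H; rewrite /ell.
apply: (@artin_act T m e Z (fun _ => True) lenact) => //.
- by move=> x b p _; case: b; cbv [lenact sgnb negb]; lia.
- by move=> a b p _ _; rewrite !run_len !ell_alt.
Qed.
End Len.

Section Vpow.
Variable T : finType.
Variable m : T -> T -> nat.
Variable e : rel T.
Variable v : T.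

Definition vpow (n : Z) : word T :=
  if (0 <=? n)%Z then nseq (Z.to_nat n) (v, false) else nseq (Z.to_nat (- n)) (v, true).

Lemma ell_vpow n : ell (vpow n) = n.
Proof.
rewrite /vpow; case: Z.leb_spec => h.
- have : forall k, ell (nseq k (v, false)) = Z.of_nat k.
    by elim=> [|k IH] //; rewrite [nseq _ _]/= ell_cons IH /sgnb; lia.
  by move=> ->; lia.
- have : forall k, ell (nseq k (v, true)) = (- Z.of_nat k)%Z.
    by elim=> [|k IH] //; rewrite [nseq _ _]/= ell_cons IH /sgnb; lia.
  by move=> ->; lia.
Qed.

Lemma vpow0 : vpow 0 = [::].
Proof. by []. Qed.

Notation AE := (artin_eq e m).

Lemma vpow_succ n b : AE ((v, b) :: vpow n) (vpow (n + sgnb b)).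
Proof.
rewrite /vpow; case: b; cbv [sgnb].
- case: (Z.leb_spec 0 n) => h.
  + case: (Z.leb_spec 0 (n + -1)) => h'.
    * have -> : Z.to_nat n = (Z.to_nat (n + -1)).+1 by lia.
      exact: (ae_cancel e m [::] _ v true).
    * have -> : Z.to_nat n = 0%nat by lia.
      have -> : Z.to_nat (- (n + -1)) = 1%nat by lia.
      exact: ae_refl.
  + case: (Z.leb_spec 0 (n + -1)) => h'; first lia.
    have -> : Z.to_nat (- (n + -1)) = (Z.to_nat (- n)).+1 by lia.
    exact: ae_refl.
- case: (Z.leb_spec 0 n) => h.
  + case: (Z.leb_spec 0 (n + 1)) => h'; last lia.
    have -> : Z.to_nat (n + 1) = (Z.to_nat n).+1 by lia.
    exact: ae_refl.
  + case: (Z.leb_spec 0 (n + 1)) => h'.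
    * have -> : Z.to_nat (- n) = 1%nat by lia.
      have -> : Z.to_nat (n + 1) = 0%nat by lia.
      exact: (ae_cancel e m [::] [::] v false).
    * have -> : Z.to_nat (- n) = (Z.to_nat (- (n + 1))).+1 by lia.
      exact: (ae_cancel e m [::] _ v false).
Qed.

Lemma vpow_add n n' : AE (vpow n ++ vpow n') (vpow (n + n')).
Proof.
elim/Z.peano_ind: n => [|n IH|n IH]; first exact: ae_refl.
- apply: ae_trans (_ : AE (((v, false) :: vpow n) ++ vpow n') _).
    apply: ae_catr; apply: ae_sym; have := vpow_succ n false; by rewrite /sgnb Z.add_1_r.
  rewrite cat_cons; apply: ae_trans (_ : AE ((v,false) :: vpow (n + n')) _).
    exact: (ae_catl [:: (v, false)] IH).
  have := vpow_succ (n + n') false; rewrite /sgnb.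
  by have -> : (n + n' + 1 = Z.succ n + n')%Z by lia.
- apply: ae_trans (_ : AE (((v, true) :: vpow n) ++ vpow n') _).
    apply: ae_catr; apply: ae_sym; have := vpow_succ n true; rewrite /sgnb.
    by have -> : (n + -1 = Z.pred n)%Z by lia.
  rewrite cat_cons; apply: ae_trans (_ : AE ((v,true) :: vpow (n + n')) _).
    exact: (ae_catl [:: (v, true)] IH).
  have := vpow_succ (n + n') true; rewrite /sgnb.
  by have -> : (n + n' + -1 = Z.pred n + n')%Z by lia.
Qed.

End Vpow.

From Stdlib Require Import ZArith Lia ClassicalEpsilon Classical PropExtensionality FunctionalExtensionality.

Lemma word_in_cat (T : finType) (X : {set T}) (w1 w2 : word T) :
  word_in X (w1 ++ w2) = word_in X w1 && word_in X w2.
Proof. exact: all_cat. Qed.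

Lemma word_in_winv (T : finType) (X : {set T}) (w : word T) : word_in X (winv w) = word_in X w.
Proof. by rewrite /word_in /winv all_rev all_map. Qed.

Lemma word_in_nseq (T : finType) (X : {set T}) x b k : x \in X -> word_in X (nseq k (x, b)).
Proof. by move=> hx; rewrite /word_in all_nseq /= hx orbT. Qed.

Lemma word_in_alt (T : finType) (X : {set T}) a b k :
  a \in X -> b \in X -> word_in X (alt_prod a b k).
Proof.
elim: k a b => [|k IH] a b ha hb //.
by rewrite alt_prodS /= ha IH.
Qed.

Lemma word_in_sub (T : finType) (X Y : {set T}) w : X \subset Y -> word_in X w -> word_in Y w.
Proof.
move=> /subsetP sub; elim: w => [|[x b] w IH] //= /andP [hx hw].
by rewrite sub //= IH.
Qed.

Section NF.
Variable T : finType.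
Variable e : rel T.
Variable m : T -> T -> nat.
Hypothesis e_sym : symmetric e.
Variables (S S1 S2 : {set T}) (v : T).
Hypotheses (hv1 : v \in S1) (hv2 : v \in S2) (hS1 : S1 \subset S) (hS2 : S2 \subset S).
Hypothesis hS12 : forall x, x \in S -> (x \in S1) || (x \in S2).
Hypothesis hI : forall x, x \in S1 -> x \in S2 -> x = v.
Hypothesis hcross : forall x y, e x y -> x \in S1 -> y \in S2 -> x = v \/ y = v.

Definition Si (i : bool) := if i then S2 else S1.
Notation AEi i := (artin_eq (induced e (Si i)) m).
Notation AE := (artin_eq (induced e S) m).
Notation vp := (vpow v).

Lemma v_Si i : v \in Si i.
Proof. by case: i. Qed.

Lemma Si_S i : Si i \subset S.
Proof. by case: i. Qed.

Lemma AEi_AE i w1 w2 : AEi i w1 w2 -> AE w1 w2.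
Proof.
apply: ae_mono => x y; rewrite /induced /=; have /subsetP sub := Si_S i.
by case/and3P => -> hx hy; rewrite !sub.
Qed.

Lemma vp_word i n : word_in (Si i) (vp n).
Proof. by rewrite /vpow; case: Z.leb; apply: word_in_nseq; apply: v_Si. Qed.

Definition Cq i (r g : word T) := exists n, AEi i g (vp n ++ r).

Lemma Cq_refl i g : Cq i g g.
Proof. by exists 0%Z; apply: ae_refl. Qed.

Lemma vp_neg i n : AEi i (vp (- n) ++ vp n) [::].
Proof. by have := vpow_add m (induced e (Si i)) v (- n) n; rewrite Z.add_opp_diag_l. Qed.

Lemma vp_neg' i n : AEi i (vp n ++ vp (- n)) [::].
Proof. by have := vpow_add m (induced e (Si i)) v n (- n); rewrite Z.add_opp_diag_r. Qed.

Lemma Cq_sym i r g : Cq i r g -> Cq i g r.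
Proof.
case=> n H; exists (- n)%Z.
apply: ae_sym; apply: ae_trans (ae_catl _ H) _.
rewrite catA; have := ae_catr r (vp_neg i n); by [].
Qed.

Lemma Cq_trans i a b c : Cq i a b -> Cq i b c -> Cq i a c.
Proof.
case=> n Hn [n' Hn']; exists (n' + n)%Z.
apply: ae_trans Hn' _; apply: ae_trans (ae_catl _ Hn) _.
rewrite catA; apply: ae_catr; exact: vpow_add.
Qed.

Lemma AE_Cq i g g' : AEi i g g' -> Cq i g g'.
Proof. by move=> H; exists 0%Z; apply: ae_sym. Qed.

Definition repP i g r :=
  [/\ Cq i r g, (exists g0, Cq i g0 g /\ word_in (Si i) g0) -> word_in (Si i) r &
      (Cq i [::] g -> r = [::])].

Definition rep i g := epsilon (inhabits [::]) (repP i g).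

Lemma repP_ex i g : exists r, repP i g r.
Proof.
case: (classic (Cq i [::] g)) => h0.
  by exists [::]; split => //.
case: (classic (exists g0, Cq i g0 g /\ word_in (Si i) g0)) => [[g0 [h1 h2]]|h1].
  by exists g0; split.
exists g; split => //; exact: Cq_refl.
Qed.

Lemma rep_spec i g : repP i g (rep i g).
Proof. exact: epsilon_spec (repP_ex i g). Qed.

Lemma rep_inv i g g' : Cq i g g' -> rep i g = rep i g'.
Proof.
move=> H; rewrite /rep; congr epsilon.
apply: functional_extensionality => r; apply: propositional_extensionality.
have H' := Cq_sym H.
split=> [] [h1 h2 h3]; split.
- exact: Cq_trans h1 H.
- by case=> g0 [c w]; apply: h2; exists g0; split => //; apply: Cq_trans c H'.
- by move=> c; apply: h3; apply: Cq_trans c H'.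
- exact: Cq_trans h1 H'.
- by case=> g0 [c w]; apply: h2; exists g0; split => //; apply: Cq_trans c H.
- by move=> c; apply: h3; apply: Cq_trans c H.
Qed.

Lemma rep_Cq i g : Cq i (rep i g) g.
Proof. by case: (rep_spec i g). Qed.

Lemma rep_idem i g : rep i (rep i g) = rep i g.
Proof. exact: rep_inv (rep_Cq i g). Qed.

Lemma rep_word i g : word_in (Si i) g -> word_in (Si i) (rep i g).
Proof. by case: (rep_spec i g) => _ h _ hg; apply: h; exists g; split => //; apply: Cq_refl. Qed.

Lemma rep_nil i g : Cq i [::] g -> rep i g = [::].
Proof. by case: (rep_spec i g) => _ _ h. Qed.

Definition coef i g := epsilon (inhabits 0%Z) (fun n => AEi i g (vp n ++ rep i g)).

Lemma coef_spec i g : AEi i g (vp (coef i g) ++ rep i g).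
Proof. by apply: (epsilon_spec (inhabits 0%Z) (fun n => AEi i g (vp n ++ rep i g))); apply: rep_Cq. Qed.

Lemma coef_uniq i g n : AEi i g (vp n ++ rep i g) -> coef i g = n.
Proof.
move=> H; have := ae_trans (ae_sym (coef_spec i g)) H.
move/ell_ae; rewrite !ell_cat !ell_vpow; lia.
Qed.

Lemma coef_inv i g g' : AEi i g g' -> coef i g = coef i g'.
Proof.
move=> H; apply: coef_uniq.
rewrite (rep_inv (AE_Cq H)); apply: ae_trans H (coef_spec i g').
Qed.

Definition St := (Z * seq (bool * word T))%type.

Definition nst (i : bool) (r : seq (bool * word T)) : bool :=
  if r is (j, _) :: _ then j != i else true.

Fixpoint vlist (ts : seq (bool * word T)) : Prop :=
  match ts with
  | [::] => True
  | (i, t) :: r => [/\ rep i t = t, t <> [::], word_in (Si i) t, nst i r & vlist r]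
  end.

Definition D i (s : St) : word T * seq (bool * word T) :=
  let: (n, ts) := s in
  match ts with
  | (j, t) :: r => if j == i then (vp n ++ t, r) else (vp n, ts)
  | [::] => (vp n, [::])
  end.

Definition Rc i h r : St := (coef i h, if rep i h == [::] then r else (i, rep i h) :: r).

Definition actN i g (s : St) : St := let d := D i s in Rc i (g ++ d.1) d.2.

Lemma D_nst i n r : nst i r -> D i (n, r) = (vp n, r).
Proof. by case: r => [|[j t] r] //= /negbTE ->. Qed.

Lemma D_rest i s : vlist s.2 -> nst i (D i s).2 /\ vlist (D i s).2.
Proof.
case: s => n [|[j t] r] //= [h1 h2 h3 h4 h5].
by case: eqP => [<-|/eqP ne] //=.
Qed.

Lemma D_word i s : vlist s.2 -> word_in (Si i) (D i s).1.
Proof.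
case: s => n [|[j t] r] /=; first by rewrite vp_word.
case=> _ _ h3 _ _; case: eqP => [E|_] /=; last exact: vp_word.
by rewrite word_in_cat vp_word -E h3.
Qed.

Lemma Rc_valid i h r : vlist r -> nst i r -> word_in (Si i) h -> vlist (Rc i h r).2.
Proof.
move=> vr nr wh /=; case: eqP => // hn /=; split => //.
- exact: rep_idem.
- exact: rep_word.
Qed.

Lemma D_Rc i h r : nst i r -> (D i (Rc i h r)).2 = r /\ AEi i (D i (Rc i h r)).1 h.
Proof.
move=> nr; rewrite /Rc; case: eqP => [E|_].
- rewrite D_nst //=; split => //; apply: ae_sym; have := coef_spec i h; by rewrite E cats0.
- rewrite /= eqxx /=; split => //; apply: ae_sym; exact: coef_spec.
Qed.

Lemma Rc_inv i h h' r : AEi i h h' -> Rc i h r = Rc i h' r.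
Proof. by move=> H; rewrite /Rc (coef_inv H) (rep_inv (AE_Cq H)). Qed.

Lemma Rc_D i s : vlist s.2 -> Rc i (D i s).1 (D i s).2 = s.
Proof.
case: s => n ts /= vts.
have hnil : forall ts', Rc i (vp n) ts' = (n, ts').
  move=> ts'; rewrite /Rc.
  have Hc : Cq i [::] (vp n) by exists n; rewrite cats0; apply: ae_refl.
  rewrite (rep_nil Hc) eqxx; congr pair; apply: coef_uniq; rewrite (rep_nil Hc) cats0.
  exact: ae_refl.
case: ts vts => [|[j t] r] //= [h1 h2 h3 h4 h5].
case: eqP => [E|_] //; subst j.
rewrite /Rc.
have Hr : rep i (vp n ++ t) = t.
  by rewrite -(rep_inv (_ : Cq i t (vp n ++ t))) // ; exists n; apply: ae_refl.
rewrite Hr; have -> : (t == [::]) = false by apply/eqP.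
congr pair; apply: coef_uniq; rewrite Hr; exact: ae_refl.
Qed.

Lemma act_valid i g s : vlist s.2 -> word_in (Si i) g -> vlist (actN i g s).2.
Proof.
move=> vs wg; have [n1 n2] := D_rest i vs.
by apply: Rc_valid => //; rewrite word_in_cat wg D_word.
Qed.

Lemma act_comp i g g' s : vlist s.2 -> actN i g (actN i g' s) = actN i (g ++ g') s.
Proof.
move=> vs; rewrite /actN; have [n1 n2] := D_rest i vs.
have [E1 E2] := D_Rc (g' ++ (D i s).1) n1.
rewrite E1 -catA; apply: Rc_inv; exact: ae_catl.
Qed.

Lemma act_nil i s : vlist s.2 -> actN i [::] s = s.
Proof. by move=> vs; rewrite /actN cat0s Rc_D. Qed.

Lemma act_inv i g g' s : AEi i g g' -> actN i g s = actN i g' s.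
Proof. by move=> H; rewrite /actN; apply: Rc_inv; apply: ae_catr. Qed.

Lemma act_v i b s : vlist s.2 -> actN i [:: (v, b)] s = ((s.1 + sgnb b)%Z, s.2).
Proof.
case: s => n ts /= vts; rewrite /actN.
have Hs : forall t, AEi i ([:: (v, b)] ++ vp n ++ t) (vp (n + sgnb b) ++ t).
  by move=> t; rewrite catA; apply: ae_catr; exact: vpow_succ.
have gen : forall t ts', t = [::] \/ rep i t = t /\ t <> [::] ->
   Rc i ([:: (v, b)] ++ vp n ++ t) ts' = ((n + sgnb b)%Z, if t == [::] then ts' else (i, t) :: ts').
  move=> t ts' ht; rewrite /Rc.
  have Hr : rep i ([:: (v, b)] ++ vp n ++ t) = t.
    case: ht => [->|[ht _]].
      by apply: rep_nil; exists (n + sgnb b)%Z; have := Hs [::]; rewrite cats0.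
    by rewrite -{2}ht; apply: rep_inv; apply: Cq_sym; exists (n + sgnb b)%Z; apply: Hs.
  rewrite Hr; congr pair; apply: coef_uniq; rewrite Hr; exact: Hs.
case: ts vts => [|[j t] r] /=.
  by move=> _; have := gen [::] [::] (or_introl erefl); rewrite cats0 /=.
case=> h1 h2 h3 h4 h5; case: eqP => [E|ne] /=.
- subst j; rewrite gen; last by right.
  by have -> : (t == [::]) = false by apply/eqP.
- have := gen [::] ((j, t) :: r) (or_introl erefl); rewrite cats0 /= => ->; done.
Qed.

Definition lact (x : T) (b : bool) (s : St) : St :=
  if x \in S1 then actN false [:: (x, b)] s
  else if x \in S2 then actN true [:: (x, b)] s else s.

Lemma lact_i i x b s : x \in Si i -> vlist s.2 -> lact x b s = actN i [:: (x, b)] s.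
Proof.
rewrite /lact; case: i => /= hx vs; last by rewrite hx.
case: ifP => h1; last by rewrite hx.
have E := hI h1 hx; subst x.
by rewrite !act_v.
Qed.

Lemma lact_valid x b s : vlist s.2 -> vlist (lact x b s).2.
Proof.
move=> vs; rewrite /lact; case: ifP => h1; first by apply: (act_valid (i:=false)) => //=; rewrite h1.
case: ifP => h2 //; by apply: (act_valid (i:=true)) => //=; rewrite h2.
Qed.

Lemma lact_inv x b s : vlist s.2 -> lact x b (lact x (~~ b) s) = s.
Proof.
move=> vs; rewrite /lact.
have gen : forall i, actN i [:: (x, b)] (actN i [:: (x, ~~ b)] s) = s.
  move=> i; rewrite act_comp // -[RHS](act_nil i vs); apply: act_inv.
  exact: (ae_cancel _ m [::] [::] x b).
case h1: (x \in S1); first exact: gen.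
by case h2: (x \in S2); first exact: gen.
Qed.

Definition runL w s := runA lact w s.

Lemma runL_valid w s : vlist s.2 -> vlist (runL w s).2.
Proof. by elim: w => [|[x b] w IH] //= vs; apply: lact_valid; apply: IH. Qed.

Lemma runL_act i w s : word_in (Si i) w -> vlist s.2 -> runL w s = actN i w s.
Proof.
elim: w => [|[x b] w IH] /=; first by move=> _ vs; rewrite act_nil.
case/andP => hx hw vs; rewrite /runL /= -/(runL w s) IH //.
rewrite (lact_i (i:=i)) //; last exact: act_valid.
by rewrite act_comp.
Qed.

Lemma edge_side a b : induced e S a b -> exists i, (a \in Si i) && (b \in Si i).
Proof.
case/and3P => eab ha hb.
case/orP: (hS12 ha) => ha'; case/orP: (hS12 hb) => hb'.
- by exists false; rewrite /= ha' hb'.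
- case: (hcross eab ha' hb') => E.
    by exists true; rewrite /= hb' E hv2.
  by exists false; rewrite /= ha' E hv1.
- rewrite e_sym in eab; case: (hcross eab hb' ha') => E.
    by exists true; rewrite /= ha' E hv2.
  by exists false; rewrite /= hb' E hv1.
- by exists true; rewrite /= ha' hb'.
Qed.

Lemma runL_AE w1 w2 s : AE w1 w2 -> vlist s.2 -> runL w1 s = runL w2 s.
Proof.
move=> H vs.
apply: (@artin_act T m (induced e S) St (fun s => vlist s.2) lact) => //.
- by move=> *; apply: lact_valid.
- by move=> *; apply: lact_inv.
- move=> a b p eab vp0; have [i /andP [ha hb]] := edge_side eab.
  rewrite -/(runL _ p) -/(runL _ p) !(runL_act (i:=i)) //; try exact: word_in_alt.
  apply: act_inv.
  have := @ae_rel T (induced e (Si i)) m [::] [::] a b; rewrite /= !cats0; apply.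
  by case/and3P: eab => eab' _ _; rewrite /induced /= eab' ha hb.
Qed.

Definition ev (s : St) : word T := vp s.1 ++ flatten (map snd s.2).

Lemma ev_D i s : ev s = (D i s).1 ++ flatten (map snd (D i s).2).
Proof.
case: s => n [|[j t] r] //=; case: eqP => _ //=; by rewrite /ev /= -catA.
Qed.

Lemma ev_Rc i h r : AE (ev (Rc i h r)) (h ++ flatten (map snd r)).
Proof.
have -> : ev (Rc i h r) = (vp (coef i h) ++ rep i h) ++ flatten (map snd r).
  rewrite /ev /Rc /=; case: eqP => [->|_] //=; by rewrite ?cats0 -?catA.
apply: ae_catr; apply: AEi_AE; apply: ae_sym; exact: coef_spec.
Qed.

Lemma ev_act i g s : AE (ev (actN i g s)) (g ++ ev s).
Proof. by rewrite /actN (ev_D i s) catA; apply: ev_Rc. Qed.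

Lemma ev_run w s : word_in S w -> vlist s.2 -> AE (ev (runL w s)) (w ++ ev s).
Proof.
elim: w => [|[x b] w IH] /=; first by move=> *; apply: ae_refl.
case/andP => hx hw vs; rewrite /runL /= -/(runL w s).
have [i hi] : exists i, x \in Si i.
  by case/orP: (hS12 hx) => h; [exists false|exists true].
rewrite (lact_i _ hi); last exact: runL_valid.
apply: ae_trans (ev_act _ _ _) _.
exact: (ae_catl [:: (x, b)] (IH hw vs)).
Qed.

Definition s0 : St := (0%Z, [::]).

Lemma ev_run0 w : word_in S w -> AE (ev (runL w s0)) w.
Proof. by move=> hw; have := ev_run hw (I : vlist s0.2); rewrite /ev /= cats0. Qed.

Lemma size_run_side i w : word_in (Si i) w -> size (runL w s0).2 <= 1.
Proof.
move=> hw; rewrite (runL_act hw) //= /actN /= /Rc /=.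
by case: eqP.
Qed.

Lemma run_flat r : vlist r -> runL (flatten (map snd r)) s0 = (0%Z, r).
Proof.
elim: r => [|[j t] r IH] //= [h1 h2 h3 h4 h5].
rewrite /runL runA_cat -/(runL _ s0) -/(runL _ _) IH //.
rewrite (runL_act (i:=j)) // /actN D_nst //= cats0 /Rc h1.
have -> : (t == [::]) = false by apply/eqP.
congr pair; apply: coef_uniq; rewrite h1; exact: ae_refl.
Qed.

Lemma Cq_nil_r i g n : Cq i [::] (g ++ vp n) -> Cq i [::] g.
Proof.
case=> n' H; exists (n' + - n)%Z; rewrite cats0 in H *.
apply: ae_trans (_ : AEi i g (g ++ vp n ++ vp (- n))) _.
  have := ae_catl g (ae_sym (vp_neg' i n)); by rewrite cats0.
rewrite catA cats0; apply: ae_trans (ae_catr _ H) _; exact: vpow_add.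
Qed.

Lemma act_prepend i g s : vlist s.2 -> nst i s.2 -> ~ Cq i [::] g ->
  exists t, (actN i g s).2 = (i, t) :: s.2.
Proof.
case: s => n ts vs ns hg; rewrite /actN (D_nst n ns) /Rc /=.
case: eqP => [E|_]; last by eexists.
case: hg; apply: (@Cq_nil_r i g n); rewrite -E; apply: rep_Cq.
Qed.

Lemma Cq_nil_winv i t : Cq i [::] (winv t) -> Cq i [::] t.
Proof.
case=> n H; rewrite cats0 in H; exists (- n)%Z; rewrite cats0.
have H1 : AEi i t (winv (vp n)) by have := ae_winv H; rewrite winvK.
apply: ae_trans H1 _.
apply: ae_trans (_ : AEi i _ (winv (vp n) ++ vp n ++ vp (- n))) _.
  have := ae_catl (winv (vp n)) (ae_sym (vp_neg' i n)); by rewrite cats0.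
rewrite catA; have := ae_catr (vp (- n)) (ae_invl m (induced e (Si i)) (vp n)); by [].
Qed.

Lemma run_winv r s : vlist r -> vlist s.2 ->
  (if r is (j, _) :: _ then nst j s.2 else true) ->
  size (runL (winv (flatten (map snd r))) s).2 = (size r + size s.2)%nat.
Proof.
elim: r s => [|[j t] r IH] s //= [h1 h2 h3 h4 h5] vs ns.
rewrite winv_cat /runL runA_cat -/(runL _ _) -/(runL _ _).
have wt : word_in (Si j) (winv t) by rewrite word_in_winv.
rewrite (runL_act wt vs).
have nc : ~ Cq j [::] (winv t).
  by move/Cq_nil_winv/rep_nil; rewrite h1.
have [t' E] := act_prepend vs ns nc.
have vs' := act_valid vs wt.
rewrite IH //.
  by rewrite (f_equal size E) /= addnS.
case: r h4 {IH h5} => [|[j' t''] r] //= h4.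
by rewrite (f_equal (nst j') E) /= eq_sym.
Qed.

Lemma key (k : word T) (X : word T -> Prop) :
  word_in S k ->
  (forall x, X x -> word_in S1 x) ->
  (forall a, word_in S1 a -> exists x, X x /\ ~ Cq false [::] (winv a ++ x ++ a)) ->
  (forall x, X x -> exists w, (word_in S1 w || word_in S2 w) /\ AE (winv k ++ x ++ k) w) ->
  exists k1, word_in S1 k1 /\ AE k k1.
Proof.
move=> hk hX hNC hconj.
set s := runL k s0.
have vs : vlist s.2 := runL_valid k (I : vlist s0.2).
have Ek : AE k (ev s) := ae_sym (ev_run0 hk).
rewrite (ev_D false s) in Ek.
set a := (D false s).1 in Ek; set rest := (D false s).2 in Ek.
have wa : word_in S1 a := D_word false vs.
have [nr vr] := D_rest false vs; rewrite -/rest in nr vr.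
case Er : rest nr vr Ek => [|[j t] r'] nr vr Ek.
  by exists a; split => //; rewrite cats0 in Ek.
exfalso.
have [x [Xx nc]] := hNC a wa.
have [w [ww Hw]] := hconj x Xx.
set fr := flatten (map snd rest).
have Hconj : AE (winv k ++ x ++ k) (winv fr ++ (winv a ++ x ++ a) ++ fr).
  rewrite /fr Er.
  apply: ae_trans (_ : AE _ (winv (a ++ flatten (map snd ((j, t) :: r'))) ++ x ++ a ++ flatten (map snd ((j, t) :: r')))) _.
    apply: ae_cat; first exact: ae_winv.
    exact: ae_catl.
  by rewrite winv_cat -!catA; apply: ae_refl.
set y := winv a ++ x ++ a.
have E1 : runL (winv fr ++ y ++ fr) s0 = runL w s0.
  exact: runL_AE (ae_trans (ae_sym Hconj) Hw) (I : vlist s0.2).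
have wy : word_in (Si false) y.
  by rewrite /y /= !word_in_cat word_in_winv wa hX.
have vrest : vlist rest by rewrite Er.
have Hfl : runL fr s0 = (0%Z, rest) := run_flat vrest.
have E2 : runL (winv fr ++ y ++ fr) s0 = runL (winv fr) (actN false y (0%Z, rest)).
  rewrite /runL runA_cat [runA _ (y ++ fr) _]runA_cat.
  change (runA lact fr s0) with (runL fr s0); rewrite Hfl.
  by change (runA lact y (0%Z, rest)) with (runL y (0%Z, rest)); rewrite (runL_act wy).
have nrest : nst false rest by rewrite Er.
have [t1 Et1] := act_prepend (s := (0%Z, rest)) vrest nrest nc.
have vs1 : vlist (actN false y (0%Z, rest)).2 := act_valid (s := (0%Z, rest)) vrest wy.
have Hsz := run_winv vrest vs1.
have : size (runL w s0).2 <= 1.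
  by case/orP: ww => hw; [apply: (size_run_side (i:=false))|apply: (size_run_side (i:=true))].
rewrite -E1 E2 Hsz; last by rewrite {1}Er (f_equal (nst j) Et1) /= eq_sym.
by rewrite (f_equal size Et1) /= Er /= addnS.
Qed.


Lemma conj_back i (a z : word T) : AEi i (a ++ (winv a ++ z ++ a) ++ winv a) z.
Proof.
have -> : a ++ (winv a ++ z ++ a) ++ winv a = (a ++ winv a) ++ z ++ (a ++ winv a).
  by rewrite -!catA.
apply: ae_trans (_ : AEi i _ ([::] ++ z ++ [::])) _; last by rewrite cats0; apply: ae_refl.
apply: ae_cat; first exact: ae_invr.
apply: ae_catl; exact: ae_invr.
Qed.

Lemma nc_edge (e_irr : irreflexive e) (m_sym : forall a b, m a b = m b a)
  (m_ge2 : forall a b, e a b -> 2 <= m a b) x y :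
  x \in S1 -> y \in S1 -> x <> y -> forall a, word_in S1 a ->
  exists z, (z = x \/ z = y) /\ ~ Cq false [::] (winv a ++ [:: (z, false)] ++ a).
Proof.
move=> hx hy nxy a wa.
case: (classic (Cq false [::] (winv a ++ [:: (x, false)] ++ a))) => hcx; last first.
  by exists x; split => //; left.
case: (classic (Cq false [::] (winv a ++ [:: (y, false)] ++ a))) => hcy; last first.
  by exists y; split => //; right.
exfalso; apply: nxy.
case: hcx => n Hn; case: hcy => n' Hn'.
have En : n = 1%Z.
  have := ell_ae Hn; rewrite cats0 !ell_cat ell_winv ell_vpow ell_cons; rewrite /sgnb.
  have -> : ell [::] = 0%Z by []. lia.
have En' : n' = 1%Z.
  have := ell_ae Hn'; rewrite cats0 !ell_cat ell_winv ell_vpow ell_cons; rewrite /sgnb.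
  have -> : ell [::] = 0%Z by []. lia.
subst n n'.
have H : AEi false [:: (x, false)] [:: (y, false)].
  apply: ae_trans (ae_sym (conj_back false a [:: (x, false)])) _.
  apply: ae_trans (conj_back false a [:: (y, false)]).
  apply: ae_catl; apply: ae_catr; exact: ae_trans Hn (ae_sym Hn').
apply: (tits_sep e_sym e_irr m_sym m_ge2 (e' := induced e S1)) H.
by move=> p q; rewrite /induced /= => /and3P [].
Qed.

End NF.

From Stdlib Require Import ZArith Lia Classical.

Section Graph.
Variable T : finType.
Variable e : rel T.
Hypothesis e_sym : symmetric e.
Hypothesis e_irr : irreflexive e.

Lemma induced_sym (X : {set T}) : symmetric (induced e X).
Proof.
by move=> x y; rewrite /induced /= e_sym; case: (x \in X); case: (y \in X); rewrite /= ?andbT ?andbF.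
Qed.

Lemma conn_in (X : {set T}) a z : a \in X -> connect (induced e X) a z -> z \in X.
Proof.
move=> ha /connectP [p pth ->]; elim: p a ha pth => [|y p IH] a ha //=.
by case/andP => /and3P [_ _ hy] pth; apply: IH.
Qed.

Lemma connect_restrict (r1 r2 : rel T) (P : pred T) a z : P a ->
  (forall x y, P x -> r1 x y -> P y /\ r2 x y) -> connect r1 a z -> connect r2 a z.
Proof.
move=> Pa H /connectP [p pth ->]; elim: p a Pa pth => [|y p IH] a Pa /=.
  by move=> _; apply: connect0.
case/andP => ay pth; have [Py ay'] := H _ _ Pa ay.
by apply: connect_trans (connect1 ay') (IH _ Py pth).
Qed.

Lemma induced_sub (X Y : {set T}) : X \subset Y -> subrel (induced e X) (induced e Y).
Proof.
by move=> /subsetP sub x y; rewrite /induced /= => /and3P [-> /sub -> /sub ->].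
Qed.

Lemma card_gt1 (X : {set T}) x y : x \in X -> y \in X -> x != y -> 1 < #|X|.
Proof.
move=> hx hy nxy.
have sub : [set x; y] \subset X by apply/subsetP => z; rewrite !inE => /orP [] /eqP ->.
by have := subset_leq_card sub; rewrite cards2 nxy.
Qed.

Definition bigc (S X : {set T}) :=
  chunk e X /\ forall X', chunk e X' -> X \subset X' -> X' \subset S -> X' = X.

Lemma in2 (h w a : T) : a \in [set h; w] -> a = h \/ a = w.
Proof. by rewrite !inE => /orP [] /eqP; auto. Qed.

Lemma chunk2 h w : e h w -> chunk e [set h; w].
Proof.
move=> ehw.
have hw : h != w by apply: contraTneq ehw => ->; rewrite e_irr.
have hin : h \in [set h; w] by rewrite !inE eqxx.
have win : w \in [set h; w] by rewrite !inE eqxx orbT.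
split.
- by apply/set0Pn; exists h.
- move=> a b /in2 [] -> /in2 [] ->; try exact: connect0.
  + by apply: connect1; rewrite /induced /= ehw hin win.
  + by apply: connect1; rewrite /induced /= e_sym ehw hin win.
- move=> u /in2 Hu a b; rewrite !inE => /andP [au /orP [] /eqP Ea] /andP [bu /orP [] /eqP Eb];
    subst a b; try exact: connect0;
    by case: Hu => Eu; subst u; rewrite ?eqxx in au bu.
Qed.

Lemma bigc_edge (S X : {set T}) : connected_in e S -> 1 < #|S| -> X \subset S -> bigc S X ->
  exists x y, [/\ x \in X, y \in X, x != y & e x y].
Proof.
move=> cS cardS XS [[X0 cX dX] maxX].
have [h hX] : exists h, h \in X by apply/set0Pn.
have hS : h \in S by apply: (subsetP XS).
case: (classic (exists x', x' \in X /\ x' != h)) => [[x' [x'X nx]]|Hone].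
  have := cX _ _ hX x'X; case/connectP => p pth Ex.
  case: p pth Ex => [|y p] /=; first by move=> _ E; rewrite -E eqxx in nx.
  case/andP => /and3P [ehy _ yX] _ _; exists h, y; split => //.
  by apply: contraTneq ehy => ->; rewrite e_irr.
exfalso.
have [u [uS nuh]] : exists u, u \in S /\ u != h.
  apply: NNPP => H; move: cardS; apply/negP; rewrite -leqNgt.
  have -> : S = [set h].
    apply/setP => z; rewrite inE; apply/idP/idP => [zS|/eqP -> //].
    by apply/negPn/negP => nz; apply: H; exists z; split.
  by rewrite cards1.
have [w [wS ehw]] : exists w, w \in S /\ e h w.
  have := cS _ _ hS uS; case/connectP => p pth Eu.
  case: p pth Eu => [|w p] /=; first by move=> _ E; rewrite -E eqxx in nuh.
  by case/andP => /and3P [ehw _ wS] _ _; exists w.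
have hw : h != w by apply: contraTneq ehw => ->; rewrite e_irr.
have XE : X \subset [set h; w].
  apply/subsetP => z zX; rewrite !inE; apply/orP; left.
  by apply/negPn/negP => nz; apply: Hone; exists z.
have := maxX _ (chunk2 ehw) XE.
have -> : [set h; w] \subset S by apply/subsetP => z /in2 [] ->.
move=> /(_ isT) E.
have : w \in X by rewrite -E !inE eqxx orbT.
move=> wX; apply: Hone; exists w; split => //; by rewrite eq_sym.
Qed.

Section Split.
Variables (S : {set T}) (v a b : T).
Hypotheses (cS : connected_in e S) (vS : v \in S) (aS : a \in S :\ v) (bS : b \in S :\ v).
Hypothesis nab : ~~ connect (induced e (S :\ v)) a b.

Definition Comp := locked [set z | connect (induced e (S :\ v)) a z].
Lemma inComp z : (z \in Comp) = connect (induced e (S :\ v)) a z.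
Proof. by rewrite /Comp -lock inE. Qed.
Definition Sp1 := v |: Comp.
Definition Sp2 := S :\: Comp.

Lemma Comp_sub z : z \in Comp -> z \in S :\ v.
Proof. by rewrite inComp; apply: conn_in. Qed.

Lemma a_Comp : a \in Comp.
Proof. by rewrite inComp connect0. Qed.

Lemma Comp_close x y : x \in Comp -> induced e (S :\ v) x y -> y \in Comp.
Proof. by rewrite !inComp => ax xy; apply: connect_trans ax (connect1 xy). Qed.

Lemma sp_hv1 : v \in Sp1.
Proof. by rewrite !inE eqxx. Qed.

Lemma v_notComp : v \notin Comp.
Proof. by apply/negP => /Comp_sub; rewrite !inE eqxx. Qed.

Lemma sp_hv2 : v \in Sp2.
Proof. by rewrite inE v_notComp. Qed.

Lemma sp_hS1 : Sp1 \subset S.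
Proof. by apply/subsetP => z; rewrite !inE => /orP [/eqP ->//|/Comp_sub]; rewrite !inE => /andP []. Qed.

Lemma sp_hS2 : Sp2 \subset S.
Proof. by apply/subsetP => z; rewrite !inE => /andP []. Qed.

Lemma sp_hS12 x : x \in S -> (x \in Sp1) || (x \in Sp2).
Proof. by move=> xS; rewrite !inE xS; case: (x \in Comp); rewrite ?orbT. Qed.

Lemma sp_hI x : x \in Sp1 -> x \in Sp2 -> x = v.
Proof. by rewrite !inE => /orP [/eqP ->|->] //. Qed.

Lemma sp_hcross x y : e x y -> x \in Sp1 -> y \in Sp2 -> x = v \/ y = v.
Proof.
move=> exy; rewrite !inE => /orP [/eqP ->|xC]; first by left.
case/andP => yC yS; case: (y =P v) => [->|nyv]; first by right.
exfalso; move/negP: yC; apply; apply: (Comp_close xC).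
by rewrite /induced /= exy (Comp_sub xC) !inE yS andbT; apply/eqP.
Qed.

Lemma b_notComp : b \notin Comp.
Proof. by rewrite inComp. Qed.

Lemma sp_card1 : #|Sp1| < #|S|.
Proof.
apply: proper_card; rewrite properE sp_hS1 /=; apply/subsetPn; exists b.
  by move: bS; rewrite !inE => /andP [].
rewrite !inE negb_or b_notComp andbT; by move: bS; rewrite !inE => /andP [].
Qed.

Lemma sp_card2 : #|Sp2| < #|S|.
Proof.
apply: proper_card; rewrite properE sp_hS2 /=; apply/subsetPn; exists a.
  by move: aS; rewrite !inE => /andP [].
by rewrite !inE a_Comp.
Qed.

Lemma sp_gt1 : 1 < #|Sp1|.
Proof.
apply: (@card_gt1 _ v a); rewrite ?sp_hv1 //; first by rewrite !inE a_Comp orbT.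
by move: aS; rewrite !inE eq_sym => /andP [].
Qed.

Lemma sp_gt2 : 1 < #|Sp2|.
Proof.
apply: (@card_gt1 _ v b); rewrite ?sp_hv2 //.
  by rewrite !inE b_notComp; move: bS; rewrite !inE => /andP [].
by move: bS; rewrite !inE eq_sym => /andP [].
Qed.

Lemma reach_v1 p x : x \in Comp -> path (induced e S) x p -> last x p = v ->
  connect (induced e Sp1) x v.
Proof.
elim: p x => [|y p IH] x xC /=; first by move=> _ E; move: xC; rewrite E (negbTE v_notComp).
case/andP => /and3P [exy xS yS] pth El.
have xS1 : x \in Sp1 by rewrite !inE xC orbT.
case: (y =P v) => [Ey|nyv].
  by subst y; apply: connect1; rewrite /induced /= exy xS1 sp_hv1.
have yC : y \in Comp.
  apply: (Comp_close xC); rewrite /induced /= exy !inE yS andbT.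
  by have := Comp_sub xC; rewrite !inE => ->; apply/eqP.
apply: connect_trans (connect1 _) (IH _ yC pth El).
by rewrite /induced /= exy xS1 !inE yC orbT.
Qed.

Lemma sp_conn1 : connected_in e Sp1.
Proof.
have H : forall x, x \in Sp1 -> connect (induced e Sp1) a x.
  move=> x; rewrite !inE => /orP [/eqP ->|xC].
    have aS' : a \in S by move: aS; rewrite !inE => /andP [].
    have := cS aS' vS.
    by case/connectP => p pth El; apply: reach_v1 a_Comp pth (esym El).
  apply: (connect_restrict (r1 := induced e (S :\ v)) (P := mem Comp)).
  - exact: a_Comp.
  - move=> x' y' /= x'C xy; have y'C := Comp_close x'C xy; split => //.
    by move: xy; rewrite /induced /= => /andP [-> _]; rewrite !inE x'C y'C !orbT.
  - by move: xC; rewrite inComp.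
move=> x y xS yS; apply: connect_trans (H _ yS).
by rewrite (sym_connect_sym (@induced_sym _)); apply: H.
Qed.

Lemma reach_v2 p x : x \in Sp2 -> path (induced e S) x p -> last x p = v ->
  connect (induced e Sp2) x v.
Proof.
elim: p x => [|y p IH] x xS2 /=; first by move=> _ ->; apply: connect0.
case/andP => /and3P [exy xS yS] pth El.
case: (x =P v) => [->|nxv]; first exact: connect0.
case: (y =P v) => [Ey|nyv].
  by subst y; apply: connect1; rewrite /induced /= exy xS2 sp_hv2.
have yS2 : y \in Sp2.
  rewrite !inE yS andbT; apply/negP => yC.
  move: xS2; rewrite !inE => /andP [/negP xC _]; apply: xC.
  apply: (Comp_close yC); rewrite /induced /= e_sym exy !inE xS yS andbT andbT.
  by rewrite /=; apply/andP; split; apply/eqP.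
apply: connect_trans (connect1 _) (IH _ yS2 pth El).
by rewrite /induced /= exy xS2 yS2.
Qed.

Lemma sp_conn2 : connected_in e Sp2.
Proof.
have H : forall x, x \in Sp2 -> connect (induced e Sp2) x v.
  move=> x xS2; have xS : x \in S by move: xS2; rewrite !inE => /andP [].
  by have := cS xS vS; case/connectP => p pth El; apply: reach_v2 xS2 pth (esym El).
move=> x y xS yS; apply: connect_trans (H _ xS) _.
by rewrite (sym_connect_sym (@induced_sym _)); apply: H.
Qed.

Lemma sp_side X : chunk e X -> X \subset S -> X \subset Sp1 \/ X \subset Sp2.
Proof.
move=> [X0 cX dX] XS.
case: (boolP (X \subset Sp1)) => h1; first by left.
case: (boolP (X \subset Sp2)) => h2; first by right.
exfalso.
case/subsetPn: h1 => x xX xn1; case/subsetPn: h2 => y yX yn2.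
have xS := subsetP XS _ xX; have yS := subsetP XS _ yX.
have yC : y \in Comp by move: yn2; rewrite !inE yS andbT negbK.
have xnC : x \notin Comp by move: xn1; rewrite !inE negb_or => /andP [].
have xv : x != v by move: xn1; rewrite !inE negb_or => /andP [].
have yv : y != v by have := Comp_sub yC; rewrite !inE => /andP [].
have cX' : connected_in e (X :\ v).
  case: (boolP (v \in X)) => vX; first exact: dX.
  have -> : X :\ v = X.
    by apply/setP => z; rewrite !inE; case: (z =P v) => // ->; rewrite (negbTE vX).
  exact: cX.
have yX' : y \in X :\ v by rewrite !inE yv yX.
have xX' : x \in X :\ v by rewrite !inE xv xX.
have sub : X :\ v \subset S :\ v.
  by apply/subsetP => z; rewrite !inE => /andP [-> /(subsetP XS) ->].
have := cX' y x yX' xX'.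
move/(connect_sub (fun p q pq => connect1 (induced_sub sub pq))) => yx.
move/negP: xnC; apply; rewrite inComp; apply: connect_trans yx.
by rewrite -inComp.
Qed.

End Split.

End Graph.

From Stdlib Require Import ZArith Lia Classical.

Section Main.
Variable T : finType.
Variable e : rel T.
Variable m : T -> T -> nat.
Hypothesis e_sym : symmetric e.
Hypothesis e_irr : irreflexive e.
Hypothesis m_sym : forall a b, m a b = m b a.
Hypothesis m_ge2 : forall a b, e a b -> 2 <= m a b.

Lemma wmap_winv f (w : word T) : wmap f (winv w) = winv (wmap f w).
Proof. by rewrite /wmap /winv map_rev -!map_comp. Qed.

Section Retr.
Variables (S A B : {set T}) (v : T).
Hypotheses (hvA : v \in A) (hAB : forall x, x \in S -> (x \in A) || (x \in B)).
Hypothesis hcross : forall x y, e x y -> x \in A -> y \in B -> x = v \/ y = v.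

Definition rho (z : T) := if z \in A then z else v.

Lemma retr w1 w2 : artin_eq (induced e S) m w1 w2 ->
  artin_eq (induced e A) m (wmap rho w1) (wmap rho w2).
Proof.
apply: ae_wmap => a b; rewrite /induced /= => /and3P [eab aS bS].
rewrite /rho; case: ifP => ha; case: ifP => hb.
- have := @ae_rel T (induced e A) m [::] [::] a b; rewrite /= !cats0; apply.
  by rewrite /induced /= eab ha hb.
- have hb' : b \in B by move: (hAB bS); rewrite hb.
  case: (hcross eab ha hb') => E; first by subst a; apply: ae_refl.
  by subst b; rewrite hvA in hb.
- have ha' : a \in B by move: (hAB aS); rewrite ha.
  rewrite e_sym in eab.
  case: (hcross eab hb ha') => E; first by subst b; apply: ae_refl.
  by subst a; rewrite hvA in ha.
- exact: ae_refl.
Qed.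

Lemma rho_id w : word_in A w -> wmap rho w = w.
Proof. by apply: wmap_id_in => z hz; rewrite /rho hz. Qed.

End Retr.

Lemma vconj (e' : rel T) (v : T) (c : word T) : word_in [set v] c ->
  artin_eq e' m (winv c ++ [:: (v, false)] ++ c) [:: (v, false)].
Proof.
elim: c => [|[x b] c IH] /=; first by move=> _; apply: ae_refl.
case/andP; rewrite inE => /eqP -> hc.
rewrite winv_cons /= -catA.
apply: ae_trans (IH hc).
apply: ae_catl => /=; case: b => /=.
- exact: (ae_cancel e' m [:: (v, false)] c v false).
- exact: (ae_cancel e' m [::] ((v, false) :: c) v true).
Qed.

Lemma conj_gen (e' : rel T) (a z : word T) :
  artin_eq e' m (a ++ (winv a ++ z ++ a) ++ winv a) z.
Proof.
have -> : a ++ (winv a ++ z ++ a) ++ winv a = (a ++ winv a) ++ z ++ (a ++ winv a).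
  by rewrite -!catA.
apply: ae_trans (_ : artin_eq e' m _ ([::] ++ z ++ [::])) _; last by rewrite cats0; apply: ae_refl.
apply: ae_cat; first exact: ae_invr.
apply: ae_catl; exact: ae_invr.
Qed.

Definition GenP (S : {set T}) :=
  forall SH SV : {set T}, SH \subset S -> SV \subset S -> bigc e S SH -> bigc e S SV ->
  forall k, word_in S k ->
  (forall h, word_in SH h -> exists w, word_in SV w /\ artin_eq (induced e S) m (winv k ++ h ++ k) w) ->
  SH = SV /\ exists k1, word_in SH k1 /\ artin_eq (induced e S) m k k1.

Lemma bigc_restr (S S1 X : {set T}) : bigc e S X -> S1 \subset S -> bigc e S1 X.
Proof.
case=> cX maxX sub; split => // X' cX' XX' X'S1.
by apply: maxX => //; apply: subset_trans X'S1 sub.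
Qed.

Section Step.
Variables (S S1 S2 : {set T}) (v : T).
Hypotheses (hv1 : v \in S1) (hv2 : v \in S2) (hS1 : S1 \subset S) (hS2 : S2 \subset S).
Hypothesis hS12 : forall x, x \in S -> (x \in S1) || (x \in S2).
Hypothesis hI : forall x, x \in S1 -> x \in S2 -> x = v.
Hypothesis hcross : forall x y, e x y -> x \in S1 -> y \in S2 -> x = v \/ y = v.
Hypothesis cS : connected_in e S.
Hypothesis cardS : 1 < #|S|.
Hypothesis IH1 : GenP S1.

Lemma hS21 x : x \in S -> (x \in S2) || (x \in S1).
Proof. by move=> /hS12; rewrite orbC. Qed.

Lemma hcross21 x y : e x y -> x \in S2 -> y \in S1 -> x = v \/ y = v.
Proof. by rewrite e_sym => exy hx hy; case: (hcross exy hy hx); auto. Qed.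

Lemma step (SH SV : {set T}) : SH \subset S1 -> SH \subset S -> SV \subset S -> bigc e S SH -> bigc e S SV ->
  (SV \subset S1) || (SV \subset S2) ->
  forall k, word_in S k ->
  (forall h, word_in SH h -> exists w, word_in SV w /\ artin_eq (induced e S) m (winv k ++ h ++ k) w) ->
  SH = SV /\ exists k1, word_in SH k1 /\ artin_eq (induced e S) m k k1.
Proof.
move=> SH1 SHS SVS bH bV SVside k hk hconj.
have [x [y [xH yH nxy exy]]] := bigc_edge e_sym e_irr cS cardS SHS bH.
have xS1 := subsetP SH1 _ xH; have yS1 := subsetP SH1 _ yH.
have [k1 [wk1 Hk1]] : exists k1, word_in S1 k1 /\ artin_eq (induced e S) m k k1.
  apply: (key e_sym hv1 hv2 hS1 hS2 hS12 hI hcross (X := fun w => word_in SH w)) => //.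
  - by move=> w; apply: word_in_sub.
  - move=> a wa.
    have nxy' : x <> y by apply/eqP.
    have [z [Ez nc]] := nc_edge e_sym S2 v e_irr m_sym m_ge2 xS1 yS1 nxy' wa.
    exists [:: (z, false)]; split => //=; rewrite andbT.
    by case: Ez => ->.
  - move=> h hh; have [w [ww Hw]] := hconj h hh; exists w; split => //.
    by case/orP: SVside => sub; rewrite (word_in_sub sub ww) ?orbT.
have hconj1 : forall h, word_in SH h -> exists w, word_in SV w /\
    artin_eq (induced e S) m (winv k1 ++ h ++ k1) w.
  move=> h hh; have [w [ww Hw]] := hconj h hh; exists w; split => //.
  apply: ae_trans Hw; apply: ae_cat; first exact: ae_winv (ae_sym Hk1).
  exact: ae_catl (ae_sym Hk1).
case: (boolP (SV \subset S1)) => SV1.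
- have Hc : forall h, word_in SH h -> exists w, word_in SV w /\
      artin_eq (induced e S1) m (winv k1 ++ h ++ k1) w.
    move=> h hh; have [w [ww Hw]] := hconj1 h hh; exists w; split => //.
    have := retr hv1 hS12 hcross Hw.
    rewrite (rho_id _ (word_in_sub SV1 ww)) rho_id //.
    by rewrite !word_in_cat word_in_winv wk1 (word_in_sub SH1 hh).
  have [E [k2 [wk2 Hk2]]] := IH1 SH1 SV1 (bigc_restr bH hS1) (bigc_restr bV hS1) wk1 Hc.
  split => //; exists k2; split => //.
  apply: ae_trans Hk1 _; apply: ae_mono Hk2; exact: induced_sub.
- have SV2 : SV \subset S2 by move: SVside; rewrite (negbTE SV1).
  exfalso.
  have toV : forall z, z \in S1 -> word_in SH [:: (z, false)] ->
      artin_eq (induced e S) m (winv k1 ++ [:: (z, false)] ++ k1) [:: (v, false)].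
    move=> z zS1 hz; have [w [ww Hw]] := hconj1 _ hz.
    have Hr := retr hv2 hS21 hcross21 Hw.
    rewrite (rho_id _ (word_in_sub SV2 ww)) !wmap_cat wmap_winv in Hr.
    have rz : rho S2 v z = v by rewrite /rho; case: ifP => // /(hI zS1).
    rewrite /= rz in Hr.
    have wc : word_in [set v] (wmap (rho S2 v) k1).
      move: wk1; elim: (k1) => [|[q bq] c IHc] //= /andP [hq hc].
      rewrite IHc // andbT inE /rho; case: ifP => // /(hI hq) ->; by [].
    apply: ae_trans Hw _; apply: ae_sym; apply: (ae_mono (induced_sub hS2)).
    by apply: ae_trans (ae_sym (vconj _ wc)) _.
  have Hx := toV x xS1 (ltac:(by rewrite /= xH)).
  have Hy := toV y yS1 (ltac:(by rewrite /= yH)).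
  have Hxy : artin_eq (induced e S) m [:: (x, false)] [:: (y, false)].
    apply: ae_trans (ae_sym (conj_gen _ k1 [:: (x, false)])) _.
    apply: ae_trans _ (conj_gen _ k1 [:: (y, false)]).
    apply: ae_catl; apply: ae_catr.
    exact: ae_trans Hx (ae_sym Hy).
  move/eqP: nxy; apply.
  apply: (tits_sep e_sym e_irr m_sym m_ge2 (e' := induced e S)) Hxy.
  by move=> p q; rewrite /induced /= => /and3P [].
Qed.

End Step.

Lemma gen n : forall S : {set T}, #|S| <= n -> 1 < #|S| -> connected_in e S -> GenP S.
Proof.
elim: n => [|n IHn] S cardn card1 cS; first by move: card1; rewrite ltnNge (leq_trans cardn).
case: (classic (forall u, u \in S -> connected_in e (S :\ u))) => [Hc|Hnc].
- have chS : chunk e S.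
    split => //; rewrite -card_gt0; exact: ltnW card1.
  move=> SH SV SHS SVS [_ maxH] [_ maxV] k hk hconj.
  have E1 := maxH S chS SHS (subxx S); have E2 := maxV S chS SVS (subxx S).
  split; first by rewrite -E1 -E2.
  by exists k; split; [rewrite -E1|apply: ae_refl].
- have [v [vS Hv]] : exists v, v \in S /\ ~ connected_in e (S :\ v).
    apply: NNPP => H; apply: Hnc => u uS; apply: NNPP => hu; apply: H; by exists u.
  have [a [b [aS [bS nab]]]] : exists a b, [/\ a \in S :\ v, b \in S :\ v & ~~ connect (induced e (S :\ v)) a b].
    apply: NNPP => H; apply: Hv => a b aS bS; apply: NNPP => hab; apply: H.
    by exists a, b; split => //; apply/negP.
  set S1 := Sp1 e S v a; set S2 := Sp2 e S v a.
  have hv1 : v \in S1 := sp_hv1 e S v a.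
  have hv2 : v \in S2 := sp_hv2 e vS aS.
  have hS1 : S1 \subset S := sp_hS1 e vS aS.
  have hS2 : S2 \subset S := sp_hS2 e S v a.
  have hS12 : forall x, x \in S -> (x \in S1) || (x \in S2) := @sp_hS12 T e S v a.
  have hI : forall x, x \in S1 -> x \in S2 -> x = v := @sp_hI T e S v a.
  have hcross : forall x y, e x y -> x \in S1 -> y \in S2 -> x = v \/ y = v := @sp_hcross T e S v a aS.
  have IH1 : GenP S1.
    apply: IHn.
    - by rewrite -ltnS; apply: leq_trans (sp_card1 vS aS bS nab) cardn.
    - exact: (sp_gt1 e aS).
    - exact: (sp_conn1 e_sym cS vS aS).
  have IH2 : GenP S2.
    apply: IHn.
    - by rewrite -ltnS; apply: leq_trans (sp_card2 e aS) cardn.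
    - exact: (sp_gt2 vS aS bS nab).
    - exact: (sp_conn2 e_sym cS vS aS).
  move=> SH SV SHS SVS bH bV k hk hconj.
  have sideV : (SV \subset S1) || (SV \subset S2).
    by case: (sp_side aS (proj1 bV) SVS) => ->; rewrite ?orbT.
  case: (sp_side aS (proj1 bH) SHS) => SHside.
  + exact: (step hv1 hv2 hS1 hS2 hS12 hI hcross cS card1 IH1 SHside SHS SVS bH bV sideV hk hconj).
  + have hS21 : forall x, x \in S -> (x \in S2) || (x \in S1) by move=> x /hS12; rewrite orbC.
    have hI21 : forall x, x \in S2 -> x \in S1 -> x = v by move=> x h2 h1; apply: hI.
    have hcross21 : forall x y, e x y -> x \in S2 -> y \in S1 -> x = v \/ y = v.
      by move=> x y; rewrite e_sym => exy hx hy; case: (hcross _ _ exy hy hx); auto.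
    have sideV' : (SV \subset S2) || (SV \subset S1) by rewrite orbC.
    exact: (step hv2 hv1 hS2 hS1 hS21 hI21 hcross21 cS card1 IH2 SHside SHS SVS bH bV sideV' hk hconj).
Qed.

End Main.

Theorem lemma5p3 (T : finType) (e : rel T) (m : T -> T -> nat)
  (e_sym : symmetric e) (e_irr : irreflexive e)
  (m_sym : forall a b, m a b = m b a)
  (m_ge2 : forall a b, e a b -> 2 <= m a b)
  (Gamma_conn : forall a b, connect e a b)
  (Gamma_card : 2 < #|T|)
  (SH SV : {set T}) (bigH : big_chunk e SH) (bigV : big_chunk e SV)
  (k : word T)
  (H_le_conj : forall h, in_parabolic e m SH h ->
      in_parabolic e m SV (winv k ++ h ++ k)) :
  (forall g, in_parabolic e m SH g <-> in_parabolic e m SV g) /\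
  in_parabolic e m SH k.
Proof.
have Eind : e =2 induced e setT by move=> x y; rewrite /induced /= !inE !andbT.
have bH : bigc e setT SH.
  by case: bigH => c mx; split => // X' cX' sub _; apply: mx.
have bV : bigc e setT SV.
  by case: bigV => c mx; split => // X' cX' sub _; apply: mx.
have cT : connected_in e setT.
  by move=> a b _ _; rewrite -(eq_connect Eind).
have wk : word_in setT k by apply/allP => l _; rewrite inE.
have hconj : forall h, word_in SH h -> exists w, word_in SV w /\
    artin_eq (induced e setT) m (winv k ++ h ++ k) w.
  move=> h hh; have [w [ww Hw]] := H_le_conj h (ex_intro _ h (conj hh (ae_refl e m h))).
  by exists w; split => //; apply: ae_ext Hw.
have [E [k1 [wk1 Hk1]]] := gen e_sym e_irr m_sym m_ge2 (n := #|T|) (S := setT)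
  (ltac:(by rewrite cardsT)) (ltac:(by rewrite cardsT; apply: ltnW)) cT (subsetT SH) (subsetT SV) bH bV wk hconj.
split; first by rewrite E.
exists k1; split => //; apply: ae_ext Hk1 => x y; by rewrite Eind.
Qed.
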